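(* Let $d\geq 3$ and $n_1\geq\cdots\geq n_d\geq 2$ be integers. Let $N$ and $M$ be the numbers of vertices and edges of $\textsc{Grid}(n_1,\ldots,n_{d-1})$, let $\tilde f$ be a $Q_{d-1}$-magic vertex labeling of $\textsc{Grid}(n_1,\ldots,n_{d-1})$ with magic sum $S$, and let $\tilde g$ be a $Q_{d-1}$-magic edge labeling of $\textsc{Grid}(n_1,\ldots,n_{d-1})$ with magic sum $S'$. Define $g$ on the edges of $\textsc{Grid}(n_1,\ldots,n_d)$ as follows, writing every edge as $e=\{\mathbf x,\mathbf y\}$ with $\mathbf y=\mathbf x+\mathbf e_i$ for a unique $i\in[d]$ ($\mathbf e_i$ the $i$-th unit vector), and writing $\mathbf x'=(x_1,\ldots,x_{d-1})$, $\mathbf y'=(y_1,\ldots,y_{d-1})$: (i) if $i=d$: $g(e)=\tilde f(\mathbf x')+n_dM+(x_d-1)N$ if $x_1+\cdots+x_{d-1}$ is odd, and $g(e)=\tilde f(\mathbf x')+n_dM+(n_d-1-x_d)N$ if $x_1+\cdots+x_{d-1}$ is even; (ii) if $d$ is odd and $i\leq d-1$, or $d$ is even and $i\leq d-2$: $g(e)=\tilde g(\{\mathbf x',\mathbf y'\})+(x_d-1)M$ if $i$ is odd, and $g(e)=\tilde g(\{\mathbf x',\mathbf y'\})+(n_d-x_d)M$ if $i$ is even; (iii) if $d$ is even and $i=d-1$: $g(e)=\tilde g(\{\mathbf x',\mathbf y'\})+(x_d-1)M$ if $x_1+\cdots+x_{d-2}$ is odd, and $g(e)=\tilde g(\{\mathbf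 x',\mathbf y'\})+(n_d-x_d)M$ if $x_1+\cdots+x_{d-2}$ is even. Then $g$ is a $Q_d$-magic edge labeling of $\textsc{Grid}(n_1,\ldots,n_d)$ with $Q_d$-magic sum $$S+2S'+2^{d-2}(n_d-2)N+2^{d-2}\bigl(2n_d+(d-1)(n_d-1)\bigr)M.$$
   Context: $[k]=\{1,\ldots,k\}$. The grid graph $\textsc{Grid}(n_1,\ldots,n_m)$ has vertex set $[n_1]\times\cdots\times[n_m]$ and edge set $\{\{\mathbf x,\mathbf y\}:\sum_{i=1}^m|x_i-y_i|=1\}$. The $m$-cube $Q_m$ is $\textsc{Grid}(2,\ldots,2)$ ($m$ entries). For graphs $G=(V,E)$ and $H$: a bijection $f:V\to\{1,\ldots,|V|\}$ is an $H$-magic vertex labeling if there is a constant $c$ with $\sum_{v\in V(H')}f(v)=c$ for every subgraph $H'\subseteq G$ isomorphic to $H$; a bijection $g:E\to\{1,\ldots,|E|\}$ is an $H$-magic edge labeling if there is a constant $c'$ with $\sum_{e\in E(H')}g(e)=c'$ for every subgraph $H'\subseteq G$ isomorphic to $H$. The constants $c$, $c'$ are the $H$-magic sums. *)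

(* Defs.v *)
From mathcomp Require Import all_boot.
Set Implicit Arguments. Unset Strict Implicit. Unset Printing Implicit Defensive.

(* A simple graph is a finType T with a (symmetric irreflexive) rel e.
   Its edge set: the 2-element sets {x,y} with e x y. *)
Definition edges (T : finType) (e : rel T) : {set {set T}} :=
  [set E : {set T} | [exists x : T, exists y : T, e x y && (E == [set x; y])]].

Definition vlabeling (T : finType) (f : T -> nat) : Prop :=
  injective f /\ forall v, 1 <= f v <= #|T|.

Definition elabeling (T : finType) (e : rel T) (g : {set T} -> nat) : Prop :=
  {in edges e &, injective g} /\ forall E, E \in edges e -> 1 <= g E <= #|edges e|.

(* phi embeds H = (U,h) as a (not necessarily induced) subgraph of G = (T,e);
   subgraphs of G isomorphic to H are exactly the images of such embeddings. *)
Definition embedding (U T : finType) (h : rel U) (e : rel T) (phi : U -> T) : Prop :=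
  injective phi /\ forall u v, h u v -> e (phi u) (phi v).

Definition vmagic (U T : finType) (h : rel U) (e : rel T) (f : T -> nat) (c : nat) : Prop :=
  vlabeling f /\
  forall phi : U -> T, embedding h e phi -> \sum_(u : U) f (phi u) = c.

Definition emagic (U T : finType) (h : rel U) (e : rel T) (g : {set T} -> nat) (c : nat) : Prop :=
  elabeling e g /\
  forall phi : U -> T, embedding h e phi -> \sum_(E in edges h) g (phi @: E) = c.

(* Grid(n_1,...,n_m): n : nat -> nat with n i = n_{i+1}; a vertex x stores
   coordinate x_{i+1} - 1 in 'I_(n i) (0-based storage). *)
Definition grid (n : nat -> nat) (m : nat) : finType :=
  {dffun forall i : 'I_m, 'I_(n i)}.

Definition gadj (n : nat -> nat) (m : nat) : rel (grid n m) :=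
  fun x y => \sum_(i < m) ((x i - y i) + (y i - x i)) == 1.

Definition cube (m : nat) := grid (fun _ => 2) m.
Definition cadj (m : nat) : rel (cube m) := @gadj (fun _ => 2) m.

(* 1-based coordinate x_{j+1} (j : nat, 0 if out of range) *)
Definition xc (n : nat -> nat) (m : nat) (x : grid n m) (j : nat) : nat :=
  odflt 0 (omap (fun i : 'I_m => (nat_of_ord (x i)).+1) (insub j)).

Definition restr (n : nat -> nat) (m : nat) (x : grid n m.+1) : grid n m :=
  finfun (fun i : 'I_m => (x (widen_ord (leqnSn m) i) : 'I_(n i))).

(* Main.v *)
Require Import Defs.
From mathcomp Require Import all_boot zify.
Set Implicit Arguments. Unset Strict Implicit. Unset Printing Implicit Defensive.

Definition cv (n : nat -> nat) (d : nat) (x : grid n d) (i : 'I_d) : nat := x i.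

Section Grid.
Variables (n : nat -> nat) (d : nat).
Local Notation G := (grid n d).

Lemma gridP (x y : G) : (forall i, cv x i = cv y i) -> x = y.
Proof. move=> h; apply/ffunP => i; apply/val_inj; exact: h. Qed.

Lemma cv_lt (x : G) i : cv x i < n i.
Proof. exact: ltn_ord. Qed.

Definition stp (x y : G) (a : 'I_d) (s : bool) :=
  forall j, cv y j + ((j == a) && ~~ s) = cv x j + ((j == a) && s).

Lemma stp_sym x y a s : stp x y a s -> stp y x a (~~ s).
Proof. move=> h j; move: (h j); rewrite negbK; lia. Qed.

Lemma gadjE (x y : G) :
  gadj x y = (\sum_(i < d) ((cv x i - cv y i) + (cv y i - cv x i)) == 1).
Proof. by []. Qed.

Lemma gadjP (x y : G) : gadj x y <-> exists a s, stp x y a s.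
Proof.
rewrite gadjE; split.
- move=> /eqP hs.
  have [a ha] : exists a : 'I_d, 0 < (cv x a - cv y a) + (cv y a - cv x a).
    apply/existsP; apply: contraT; rewrite negb_exists => /forallP h0.
    move: hs; rewrite big1 // => i _; move: (h0 i); lia.
  rewrite (bigD1 a) //= in hs.
  have [ht h1] : ((cv x a - cv y a) + (cv y a - cv x a) = 1) /\
     \sum_(i < d | i != a) ((cv x i - cv y i) + (cv y i - cv x i)) = 0.
    by move: hs ha; set r := bigop _ _ _; clearbody r; lia.
  move/eqP: h1; rewrite sum_nat_eq0 => /forallP h1.
  exists a, (cv x a < cv y a) => j.
  case: (eqVneq j a) => [->|hj] /=.
    by case: (ltnP (cv x a) (cv y a)) => /= ?; lia.
  move: (h1 j); rewrite hj /= => /eqP. lia.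
- case=> a [s h]; rewrite (bigD1 a) //= big1.
    move: (h a); rewrite eqxx /=; case: s {h} => /=; lia.
  move=> i hi; move: (h i); rewrite (negbTE hi) /=; lia.
Qed.

Lemma stp_uniq x y a s b t : stp x y a s -> stp x y b t -> a = b /\ s = t.
Proof.
move=> h1 h2.
have: (a == b) && (s == t).
  move: (h1 a) (h2 a); rewrite eqxx /=.
  case: (eqVneq a b) => [->|hab] /=; first by case: s {h1}; case: t {h2} => /=; lia.
  by case: s {h1} => /=; lia.
by case/andP => /eqP -> /eqP ->.
Qed.


Lemma stp_cv x y a s : stp x y a s -> forall j, j != a -> cv y j = cv x j.
Proof. move=> h j hj; move: (h j); rewrite (negbTE hj) /=; lia. Qed.

Lemma stp_neq x y a s : stp x y a s -> x != y.
Proof. move=> h; apply/eqP => e; subst y; move: (h a); rewrite eqxx /=; case: s {h} => /=; lia. Qed.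

Lemma stp_det x y1 y2 a s : stp x y1 a s -> stp x y2 a s -> y1 = y2.
Proof. move=> h1 h2; apply: gridP => j; move: (h1 j) (h2 j); lia. Qed.

Definition gmk (x0 : G) (f : 'I_d -> nat) : G := @finfun _ (fun j : 'I_d => 'I_(n j)) (fun j : 'I_d => insubd (x0 j) (f j)).

Lemma cv_gmk (x0 : G) (f : 'I_d -> nat) (j : 'I_d) : f j < n j -> cv (gmk x0 f) j = f j.
Proof. by move=> h; rewrite /cv /gmk ffunE val_insubd h. Qed.

Definition gsucc (x : G) (k : 'I_d) : G := gmk x (fun j => cv x j + (j == k)).

Lemma cv_gsucc (x : G) (k j : 'I_d) : cv x k + 1 < n k -> cv (gsucc x k) j = cv x j + (j == k).
Proof.
move=> h; rewrite cv_gmk //; case: (eqVneq j k) => [->|hj]; first by [].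
by rewrite addn0; apply: cv_lt.
Qed.

Lemma stp_gsucc x k : cv x k + 1 < n k -> stp x (gsucc x k) k true.
Proof. move=> h j; rewrite cv_gsucc //= andbF; lia. Qed.

Lemma stp_valid x y k : stp x y k true -> cv x k + 1 < n k.
Proof. move=> h; move: (h k) (cv_lt y k); rewrite eqxx /=; lia. Qed.

Lemma stp_gsuccE x y k : stp x y k true -> y = gsucc x k.
Proof. move=> h; apply: stp_det h (stp_gsucc (stp_valid h)). Qed.

Lemma edgesP E : E \in edges (@gadj n d) <-> exists x y k, stp x y k true /\ E = [set x; y].
Proof.
rewrite /edges inE; split.
- case/existsP => x /existsP [y /andP [/gadjP [a [s h]] /eqP ->]].
  case: s h => h; first by exists x, y, a.
  by exists y, x, a; split; [exact: (stp_sym h) | rewrite setUC].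
- case=> x [y [k [h ->]]]; apply/existsP; exists x; apply/existsP; exists y.
  by rewrite eqxx andbT; apply/gadjP; exists k, true.
Qed.

Lemma edge_uniq x y k x' y' k' : stp x y k true -> stp x' y' k' true ->
  [set x; y] = [set x'; y'] -> x = x' /\ y = y' /\ k = k'.
Proof.
move=> h h' e.
have hx : x \in [set x'; y'] by rewrite -e !inE eqxx.
have hy : y \in [set x'; y'] by rewrite -e !inE eqxx orbT.
rewrite !inE in hx hy.
have hxx : x = x'.
  case/orP: hx => /eqP // exy.
  case/orP: hy => /eqP eyx; last by move: (stp_neq h); rewrite exy eyx eqxx.
  subst; move: (h k) (h' k); rewrite eqxx /=; case: (k == k') => /=; lia.
subst x'; have hyy : y = y'.
  case/orP: hy => /eqP // eyx; by move: (stp_neq h); rewrite eyx eqxx.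
subst y'; split => //; split => //; by case: (stp_uniq h h').
Qed.

Lemma edge_sum (F : {set G} -> nat) :
  \sum_(E in edges (@gadj n d)) F E =
  \sum_(k < d) \sum_(x : G | cv x k + 1 < n k) F [set x; gsucc x k].
Proof.
pose P := [set p : 'I_d * G | cv p.2 p.1 + 1 < n p.1].
pose h := fun p : 'I_d * G => [set p.2; gsucc p.2 p.1].
have -> : edges (@gadj n d) = h @: P.
  apply/setP => E; apply/idP/idP.
    move/edgesP => [x [y [k [hs ->]]]]; apply/imsetP; exists (k, x).
      by rewrite inE /=; exact: stp_valid hs.
    by rewrite /h /= -(stp_gsuccE hs).
  case/imsetP => [[k x]]; rewrite inE /= => hk ->; apply/edgesP.
  by exists x, (gsucc x k), k; split => //; exact: stp_gsucc.
rewrite big_imset /=.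
  by rewrite pair_big_dep /=; apply: eq_bigl => p; rewrite inE.
move=> [k x] [k' x']; rewrite !inE /= => hk hk' e.
have [-> [_ ->]] := edge_uniq (stp_gsucc hk) (stp_gsucc hk') e.
by [].
Qed.


Lemma stpA x y a s : stp x y a s -> cv y a + ~~ s = cv x a + s.
Proof. by move=> h; move: (h a); rewrite eqxx. Qed.

Lemma square p0 p1 p2 p3 a s b r c t e v :
  stp p0 p1 a s -> stp p1 p2 b r -> stp p0 p3 c t -> stp p3 p2 e v ->
  p0 != p2 -> p1 != p3 -> [/\ e = a, v = s & a != c].
Proof.
move=> h01 h12 h03 h32 n02 n13.
have A01 := stpA h01; have A12 := stpA h12; have A03 := stpA h03; have A32 := stpA h32.
have hac : ~ (c = a /\ t = s).
  by case=> ec et; subst c t; move: n13; rewrite (stp_det h01 h03) eqxx.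
case: (eqVneq a b) => [eab|nab].
  subst b; exfalso.
  have hrs : r = s.
    destruct r, s => //; [have := stp_sym h01 | have := stp_sym h01] => h10;
    by move: n02; rewrite (stp_det h12 h10) eqxx.
  subst r.
  case: (eqVneq c a) => [eca|nca]; last first.
    have e3 : cv p3 a = cv p0 a by apply: (stp_cv h03); rewrite eq_sym.
    case: (eqVneq e a) => [eea|nea].
      subst e; destruct s, v; simpl in *; lia.
    have e2 : cv p2 a = cv p3 a by apply: (stp_cv h32); rewrite eq_sym.
  destruct s; simpl in *; lia.
  subst c; case: (eqVneq e a) => [eea|nea].
    subst e; apply: hac; split => //; destruct s, t, v; simpl in *; lia.
  have e2 : cv p2 a = cv p3 a by apply: (stp_cv h32); rewrite eq_sym.
  destruct s, t; simpl in *; lia.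
have B12 := stp_cv h01 (j := b); rewrite eq_sym in B12.
have e1 := stp_cv h12 (j := a); rewrite nab in e1.
have e1' := e1 isT.
case: (eqVneq c a) => [eca|nca].
  subst c; case: (eqVneq e a) => [eea|nea].
    subst e; destruct s, t, v; simpl in *; lia.
  have e2 : cv p2 a = cv p3 a by apply: (stp_cv h32); rewrite eq_sym.
  exfalso; apply: hac; split => //.
  destruct s, t; simpl in *; lia.
have e3 : cv p3 a = cv p0 a by apply: (stp_cv h03); rewrite eq_sym.
case: (eqVneq e a) => [eea|nea].
  subst e; split => //; first by destruct s, v; simpl in *; lia.
have e2 : cv p2 a = cv p3 a by apply: (stp_cv h32); rewrite eq_sym.
exfalso; destruct s; simpl in *; lia.
Qed.


Definition stpb (x y : G) (a : 'I_d) (s : bool) :=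
  [forall j, cv y j + ((j == a) && ~~ s) == cv x j + ((j == a) && s)].

Lemma stpbP x y a s : reflect (stp x y a s) (stpb x y a s).
Proof.
apply: (iffP forallP) => h j; first exact/eqP/h.
exact/eqP/h.
Qed.

End Grid.

Notation C d := (cube d).
Definition ccv (d : nat) (u : cube d) (i : 'I_d) : nat := @cv (fun _ => 2) d u i.

Lemma ccv_lt d (u : C d) i : ccv u i < 2.
Proof. exact: (@cv_lt (fun _ => 2) d u i). Qed.

Section Shift.
Variables (n : nat -> nat) (d : nat).
Local Notation G := (grid n d).

Definition valid (b : G) := forall j, cv b j + 1 < n j.

Definition gshift (b : G) (u : C d) : G := gmk b (fun j => cv b j + ccv u j).

Lemma cv_gshift b u j : valid b -> cv (gshift b u) j = cv b j + ccv u j.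
Proof. move=> hb; rewrite cv_gmk //; move: (hb j) (ccv_lt u j); lia. Qed.

Lemma stp_gshift b u v a s : valid b ->
  stp (gshift b u) (gshift b v) a s <-> @stp (fun _ => 2) d u v a s.
Proof.
move=> hb; split => h j; move: (h j); rewrite !cv_gshift //; rewrite /ccv; lia.
Qed.

Lemma gshift_inj b : valid b -> injective (gshift b).
Proof.
move=> hb u v e; apply: (@gridP (fun _ => 2)) => j.
have := congr1 (fun x => cv x j) e; rewrite /= !cv_gshift // /ccv; lia.
Qed.

Lemma gshift_adj b u v : valid b -> gadj (gshift b u) (gshift b v) <-> cadj u v.
Proof.
move=> hb; rewrite /cadj; split.
  by case/gadjP => a [s h]; apply/gadjP; exists a, s; apply/(stp_gshift _ _ _ _ hb).
by case/gadjP => a [s h]; apply/gadjP; exists a, s; apply/(stp_gshift _ _ _ _ hb).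
Qed.

Lemma gshift_emb b : valid b -> embedding (@cadj d) (@gadj n d) (gshift b).
Proof. by move=> hb; split; [exact: gshift_inj | move=> u v /(gshift_adj _ _ hb)]. Qed.

Lemma cube_sum (F : {set G} -> nat) b : valid b ->
  \sum_(E in edges (@cadj d)) F (gshift b @: E) =
  \sum_(k < d) \sum_(u : C d | ccv u k == 0)
     F [set gshift b u; gshift b (@gsucc (fun _ => 2) d u k)].
Proof.
move=> hb; rewrite /cadj edge_sum; apply: eq_bigr => k _.
apply: eq_big => [u|u _]; first by rewrite /ccv; move: (ccv_lt u k); rewrite /ccv; lia.
by rewrite imsetU1 imset_set1.
Qed.

End Shift.

Section Cube.
Variable d : nat.

Definition cz : C d := [ffun _ => ord0].

Lemma ccv_cz j : ccv cz j = 0.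
Proof. by rewrite /ccv /cv ffunE. Qed.

Definition csucc (u : C d) k := @gsucc (fun _ => 2) d u k.

Lemma ccv_csucc u k j : ccv u k = 0 -> ccv (csucc u k) j = ccv u j + (j == k).
Proof. by move=> h; rewrite /ccv /csucc cv_gsucc // -/(ccv u k) h. Qed.

Lemma cstp u k : ccv u k = 0 -> @stp (fun _ => 2) d u (csucc u k) k true.
Proof. by move=> h; apply: stp_gsucc; rewrite -/(ccv u k) h. Qed.

Lemma cadj_succ u k : ccv u k = 0 -> cadj u (csucc u k).
Proof. by move=> h; apply/gadjP; exists k, true; apply: cstp. Qed.

Definition cclr (u : C d) k : C d := @gmk (fun _ => 2) d u (fun j => ccv u j - (j == k)).

Lemma ccv_cclr u k j : ccv (cclr u k) j = ccv u j - (j == k).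
Proof. rewrite /ccv /cclr cv_gmk //; move: (ccv_lt u j); rewrite /ccv; lia. Qed.

Lemma csucc_cclr u k : ccv u k = 1 -> csucc (cclr u k) k = u.
Proof.
move=> h; apply: (@gridP (fun _ => 2)) => j; rewrite -!/(ccv _ j).
have h0 : ccv (cclr u k) k = 0 by rewrite ccv_cclr h eqxx.
rewrite (ccv_csucc _ h0) ccv_cclr.
case: (eqVneq j k) => [->|_]; first by rewrite h.
by rewrite subn0 addn0.
Qed.

Lemma csucc_comm u i j : ccv u i = 0 -> ccv u j = 0 -> i != j ->
  csucc (csucc u i) j = csucc (csucc u j) i.
Proof.
move=> hi hj hij; apply: (@gridP (fun _ => 2)) => l; rewrite -!/(ccv _ l).
have h1 : ccv (csucc u i) j = 0 by rewrite ccv_csucc // eq_sym (negbTE hij) addn0.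
have h2 : ccv (csucc u j) i = 0 by rewrite ccv_csucc // (negbTE hij) addn0.
rewrite (ccv_csucc _ h1) (ccv_csucc _ h2) !ccv_csucc //; lia.
Qed.

Definition cw (u : C d) := \sum_j ccv u j.

Lemma cw0 u : cw u = 0 -> u = cz.
Proof.
move/eqP; rewrite /cw sum_nat_eq0 => /forallP h.
by apply: (@gridP (fun _ => 2)) => j; rewrite -!/(ccv _ j) ccv_cz; apply/eqP/h.
Qed.

Lemma cw_pos u : 0 < cw u -> exists j, ccv u j = 1.
Proof.
move=> h; have /existsP [j /eqP hj] : [exists j, ccv u j == 1]; last by exists j.
apply: contraTT h; rewrite negb_exists => /forallP h.
rewrite -leqNgt leqn0 /cw; apply/eqP/big1 => j _.
by move: (h j) (ccv_lt u j) => /eqP; lia.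
Qed.

Lemma cw_cclr u k : ccv u k = 1 -> cw (cclr u k) < cw u.
Proof.
move=> h; rewrite /cw (bigD1 k) //= [X in _ < X](bigD1 k) //= ccv_cclr h eqxx /=.
have -> : \sum_(j < d | j != k) ccv (cclr u k) j = \sum_(j < d | j != k) ccv u j.
  by apply: eq_bigr => j hj; rewrite ccv_cclr (negbTE hj) subn0.
by rewrite subnn add0n add1n.
Qed.

End Cube.

Section Classify.
Variables (n : nat -> nat) (d : nat).
Local Notation G := (grid n d).
Variable phi : C d -> G.
Hypothesis hinj : injective phi.
Hypothesis hadj : forall u v, cadj u v -> gadj (phi u) (phi v).

Local Notation Z := (cz d).

Lemma stp_ex u k : ccv u k = 0 -> exists a s, stp (phi u) (phi (csucc u k)) a s.
Proof. by move=> h; apply/gadjP/hadj/cadj_succ. Qed.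

Definition dir (i : 'I_d) : 'I_d * bool :=
  odflt (i, true) [pick p : 'I_d * bool | stpb (phi Z) (phi (csucc Z i)) p.1 p.2].

Lemma dir_spec i : stp (phi Z) (phi (csucc Z i)) (dir i).1 (dir i).2.
Proof.
rewrite /dir; case: pickP => [p /stpbP //|h].
have [a [s hs]] := stp_ex (ccv_cz i).
by move: (h (a, s)) => /=; move/stpbP: hs => ->.
Qed.


Lemma dir_prop_aux k : forall u i, cw u <= k -> ccv u i = 0 ->
  stp (phi u) (phi (csucc u i)) (dir i).1 (dir i).2.
Proof.
elim: k => [|k IH] u i hw hi.
  by move: hw; rewrite leqn0 => /eqP /cw0 ->; apply: dir_spec.
case: (posnP (cw u)) => [/cw0 ->|hpos]; first exact: dir_spec.
have [j hj] := cw_pos hpos.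
have hij : i != j by apply/eqP => e; subst j; rewrite hi in hj.
set w := cclr u j.
have hwj : ccv w j = 0 by rewrite ccv_cclr hj eqxx.
have hwi : ccv w i = 0 by rewrite ccv_cclr (negbTE hij) subn0.
have hu : csucc w j = u by apply: csucc_cclr.
have h01 : stp (phi w) (phi (csucc w i)) (dir i).1 (dir i).2.
  apply: IH hwi; have := cw_cclr hj; rewrite -/w; lia.
have hwij : ccv (csucc w i) j = 0 by rewrite ccv_csucc // eq_sym (negbTE hij) addn0.
have [b [r h12]] := stp_ex hwij.
have [c [t h03]] := stp_ex hwj.
have hui : ccv u i = 0 by [].
have [e [v h32]] := stp_ex hui.
rewrite -hu -csucc_comm // in h32.
have n02 : phi w != phi (csucc (csucc w i) j).
  apply/eqP => /hinj /(congr1 (fun x => ccv x i)); rewrite !ccv_csucc // ?eqxx.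
    by rewrite (negbTE hij); lia.
  by rewrite hwj eq_sym (negbTE hij).
have n13 : phi (csucc w i) != phi (csucc w j).
  apply/eqP => /hinj /(congr1 (fun x => ccv x i)); rewrite !ccv_csucc // eqxx.
  by rewrite (negbTE hij); lia.
have [ee vv _] := square h01 h12 h03 h32 n02 n13.
by rewrite -hu -(csucc_comm hwi hwj hij); rewrite ee vv in h32.
Qed.

Lemma dir_prop u i : ccv u i = 0 -> stp (phi u) (phi (csucc u i)) (dir i).1 (dir i).2.
Proof. exact: (@dir_prop_aux (cw u)). Qed.


Definition pax i := (dir i).1.
Definition psg i := (dir i).2.

Lemma pax_inj : injective pax.
Proof.
move=> i j e; apply/eqP; apply: contraTT isT => hij.
have hZi := ccv_cz i; have hZj := ccv_cz j.
have h01 := dir_prop hZi; have h03 := dir_prop hZj.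
have hij' : ccv (csucc Z i) j = 0 by rewrite ccv_csucc // eq_sym (negbTE hij) ccv_cz.
have hji' : ccv (csucc Z j) i = 0 by rewrite ccv_csucc // (negbTE hij) ccv_cz.
have [b [r h12]] := stp_ex hij'.
have [c [t h32]] := stp_ex hji'.
rewrite -csucc_comm // in h32.
have n02 : phi Z != phi (csucc (csucc Z i) j).
  apply/eqP => /hinj /(congr1 (fun x => ccv x i)); rewrite !ccv_csucc // ?eqxx ?ccv_cz.
    by rewrite (negbTE hij).
  by rewrite eq_sym (negbTE hij).
have n13 : phi (csucc Z i) != phi (csucc Z j).
  apply/eqP => /hinj /(congr1 (fun x => ccv x i)); rewrite !ccv_csucc // eqxx.
  by rewrite (negbTE hij) ccv_cz.
have [_ _] := square h01 h12 h03 h32 n02 n13.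
by rewrite -/(pax i) -/(pax j) e eqxx.
Qed.

Definition iax (a : 'I_d) : 'I_d := invF pax_inj a.

Lemma pax_iax a : pax (iax a) = a.
Proof. exact: f_invF. Qed.

Lemma iax_pax i : iax (pax i) = i.
Proof. exact: invF_f. Qed.

Lemma pos_aux k : forall u a, cw u <= k ->
  cv (phi u) a + ((ccv u (iax a) == 1) && ~~ psg (iax a)) =
  cv (phi Z) a + ((ccv u (iax a) == 1) && psg (iax a)).
Proof.
elim: k => [|k IH] u a hw.
  by move: hw; rewrite leqn0 => /eqP /cw0 ->; rewrite ccv_cz.
case: (posnP (cw u)) => [/cw0 ->|hpos]; first by rewrite ccv_cz.
have [j hj] := cw_pos hpos.
set w := cclr u j.
have hwj : ccv w j = 0 by rewrite ccv_cclr hj eqxx.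
have hu : csucc w j = u by apply: csucc_cclr.
have IHw := IH w a ltac:(have := cw_cclr hj; rewrite -/w; lia).
have hs := dir_prop hwj; rewrite hu in hs; move: (hs a).
rewrite -/(pax j) -/(psg j).
case: (eqVneq a (pax j)) => [ea|na].
  have ej : iax a = j by rewrite ea iax_pax.
  rewrite ej hwj /= in IHw *; rewrite hj /=.
  case: (psg j) IHw => /=; lia.
have nj : iax a != j by apply: contraNneq na => <-; rewrite pax_iax.
have : ccv w (iax a) = ccv u (iax a) by rewrite ccv_cclr (negbTE nj) subn0.
move=> ew; rewrite ew in IHw; rewrite /=; lia.
Qed.

Lemma pos u a : cv (phi u) a + ((ccv u (iax a) == 1) && ~~ psg (iax a)) =
  cv (phi Z) a + ((ccv u (iax a) == 1) && psg (iax a)).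
Proof. exact: (@pos_aux (cw u)). Qed.

Definition bse : G := gmk (phi Z) (fun a => if psg (iax a) then cv (phi Z) a else (cv (phi Z) a).-1).

Lemma unit_step a : cv (phi (csucc Z (iax a))) a + ~~ psg (iax a) = cv (phi Z) a + psg (iax a).
Proof.
have := stpA (dir_prop (ccv_cz (iax a))); by rewrite -/(pax _) -/(psg _) pax_iax.
Qed.

Lemma cv_bse a : cv bse a = if psg (iax a) then cv (phi Z) a else (cv (phi Z) a).-1.
Proof.
rewrite cv_gmk //; have := cv_lt (phi Z) a; case: (psg _) => //; lia.
Qed.

Lemma bse_valid : valid bse.
Proof.
move=> a; rewrite cv_bse; have := unit_step a; have := cv_lt (phi (csucc Z (iax a))) a.
have := cv_lt (phi Z) a; case: (psg _) => /=; lia.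
Qed.

Definition tau (u : C d) : C d :=
  @gmk (fun _ => 2) d Z (fun a => if psg (iax a) then ccv u (iax a) else 1 - ccv u (iax a)).

Lemma ccv_tau u a : ccv (tau u) a = if psg (iax a) then ccv u (iax a) else 1 - ccv u (iax a).
Proof. rewrite /ccv /tau cv_gmk //; have := ccv_lt u (iax a); rewrite /ccv; case: (psg _); lia. Qed.

Lemma phi_tau u : phi u = gshift bse (tau u).
Proof.
apply: gridP => a; rewrite cv_gshift; last exact: bse_valid.
rewrite cv_bse ccv_tau.
have := pos u a; have := unit_step a; have := ccv_lt u (iax a).
case: (psg _) => /=; case: (ccv u (iax a)) => [|[|]] //=; lia.
Qed.

Lemma tau_inj : injective tau.
Proof. by move=> u v e; apply: hinj; rewrite !phi_tau e. Qed.

Lemma tau_adj u v : cadj u v -> cadj (tau u) (tau v).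
Proof.
move=> /hadj; rewrite !phi_tau => h; exact: (proj1 (gshift_adj _ _ bse_valid) h).
Qed.

End Classify.

Lemma magic_reduce n d (phi : C d -> grid n d) (F : {set grid n d} -> nat) :
  embedding (@cadj d) (@gadj n d) phi ->
  exists b, valid b /\
    \sum_(E in edges (@cadj d)) F (phi @: E) = \sum_(E in edges (@cadj d)) F (gshift b @: E).
Proof.
case=> hinj hadj; exists (bse hinj hadj); split; first exact: bse_valid.
set b := bse hinj hadj; set t := tau hinj hadj.
have e1 : forall E : {set C d}, phi @: E = gshift b @: (t @: E).
  move=> E; apply/setP => y; apply/imsetP/imsetP.
    by case=> u hu ->; exists (t u); [apply/imsetP; exists u | exact: (phi_tau hinj hadj u)].
  case=> v /imsetP [u hu ->] ->; exists u; first exact: hu. exact: (esym (phi_tau hinj hadj u)).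
transitivity (\sum_(E in edges (@cadj d)) F (gshift b @: (t @: E))); first by apply: eq_bigr => E _; rewrite e1.
have ti : injective (fun E : {set C d} => t @: E) by apply: imset_inj; exact: tau_inj.
have eA : (fun E : {set C d} => t @: E) @: edges (@cadj d) = edges (@cadj d).
  apply/eqP; rewrite eqEcard card_in_imset; last by move=> ? ? _ _; apply: ti.
  rewrite leqnn andbT; apply/subsetP => F' /imsetP [E' hE' ->].
  move/edgesP: hE' => [u [v [k [h ->]]]]; rewrite imsetU1 imset_set1.
  have : cadj (t u) (t v) by apply: tau_adj; apply/gadjP; exists k, true.
  rewrite /edges inE => hh; apply/existsP; exists (t u); apply/existsP; exists (t v).
  by rewrite hh eqxx.
rewrite -(big_imset (fun E : {set C d} => F (gshift b @: E)) (h := fun E : {set C d} => t @: E)); last by move=> ? ? _ _; apply: ti.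
by rewrite eA.
Qed.

Lemma xcE n d (x : grid n d) (i : 'I_d) : xc x i = (cv x i).+1.
Proof.
rewrite /xc; case: insubP => [i' _ hi|]; last by rewrite ltn_ord.
by have -> : i' = i by apply: val_inj.
Qed.

Lemma xc_out n d (x : grid n d) j : d <= j -> xc x j = 0.
Proof. by move=> h; rewrite /xc insubF // ltnNge h. Qed.

Definition cvn n d (x : grid n d) (j : nat) := (xc x j).-1.

Lemma cvnE n d (x : grid n d) (i : 'I_d) : cvn x i = cv x i.
Proof. by rewrite /cvn xcE. Qed.

Lemma cv_restr n m (x : grid n m.+1) (j : 'I_m) : cv (restr x) j = cv x (widen_ord (leqnSn m) j).
Proof. by rewrite /cv /restr ffunE. Qed.

Lemma xc_restr n m (x : grid n m.+1) j : j < m -> xc (restr x) j = xc x j.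
Proof.
move=> hj; rewrite -[j]/(nat_of_ord (Ordinal hj)) xcE cv_restr.
by rewrite -[X in _ = xc x X]/(nat_of_ord (widen_ord (leqnSn m) (Ordinal hj))) xcE.
Qed.

Section Ext.
Variables (n : nat -> nat) (m : nat) (x0 : grid n m.+1).

Definition gext (x : grid n m) (t : 'I_(n m)) : grid n m.+1 :=
  gmk x0 (fun a => if a < m then cvn x a else t).

Lemma cv_gext x t (a : 'I_m.+1) : cv (gext x t) a = if a < m then cvn x a else t.
Proof.
rewrite cv_gmk //; case: ifP => h.
  by rewrite -[nat_of_ord a]/(nat_of_ord (Ordinal h)) cvnE -[n a]/(n (Ordinal h)) cv_lt.
have -> : nat_of_ord a = m by move: (ltn_ord a) h; lia.
exact: ltn_ord.
Qed.

Lemma restr_gext x t : restr (gext x t) = x.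
Proof.
apply: gridP => j; rewrite cv_restr cv_gext /= ltn_ord.
by rewrite -[nat_of_ord j]/(nat_of_ord (widen_ord (leqnSn m) j)) cvnE; congr cv; apply: val_inj.
Qed.

Lemma cv_gext_max x t : cv (gext x t) ord_max = t.
Proof. by rewrite cv_gext /= ltnn. Qed.

Lemma gext_restr (y : grid n m.+1) : gext (restr y) (y ord_max) = y.
Proof.
apply: gridP => a; rewrite cv_gext; case: ifP => h.
  rewrite -[nat_of_ord a]/(nat_of_ord (Ordinal h)) cvnE cv_restr; congr cv; exact: val_inj.
have -> : a = ord_max by apply: val_inj => /=; move: (ltn_ord a) h; lia.
by [].
Qed.

Lemma sum_ext (F : grid n m.+1 -> nat) :
  \sum_(y : grid n m.+1) F y = \sum_(t : 'I_(n m)) \sum_(x : grid n m) F (gext x t).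
Proof.
rewrite pair_big /= (reindex (fun p : 'I_(n m) * grid n m => gext p.2 p.1)) //.
exists (fun y : grid n m.+1 => ((y ord_max : 'I_(n m)), restr y)) => [[t x] _|y _] /=.
  rewrite restr_gext; congr pair; apply: val_inj; exact: cv_gext_max.
exact: gext_restr.
Qed.

End Ext.

Lemma xcN n d (x : grid n d) j (hj : j < d) : xc x j = (cv x (Ordinal hj)).+1.
Proof. exact: (xcE x (Ordinal hj)). Qed.

Lemma odd_flip A B c : A + 2 * c = B + 1 -> odd A = ~~ odd B.
Proof. rewrite mul2n addn1 => /(congr1 odd); rewrite oddD odd_double oddS addbF => ->; by case: (odd B). Qed.

Section Flip.
Variable d : nat.

Definition cflip (u : C d) (i0 : 'I_d) : C d :=
  @gmk (fun _ => 2) d u (fun j => if j == i0 then 1 - ccv u j else ccv u j).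

Lemma ccv_cflip u i0 j : ccv (cflip u i0) j = if j == i0 then 1 - ccv u j else ccv u j.
Proof. rewrite /ccv /cflip cv_gmk //; have := ccv_lt u j; rewrite /ccv; case: (_ == _); lia. Qed.

Lemma cflipK i0 : involutive (cflip ^~ i0).
Proof.
move=> u; apply: (@gridP (fun _ => 2)) => j; rewrite -!/(ccv _ j) !ccv_cflip.
case: (_ == _) => //; have := ccv_lt u j; lia.
Qed.

Lemma flip_sum (i0 : 'I_d) (P par : pred (C d)) A B :
  (forall u, P (cflip u i0) = P u) -> (forall u, par (cflip u i0) = ~~ par u) ->
  2 * \sum_(u | P u) (if par u then A else B) = (\sum_(u | P u) 1) * (A + B).
Proof.
move=> hP hpar.
have e : \sum_(u | P u) (if par u then A else B) = \sum_(u | P u) (if par u then B else A).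
  rewrite (reindex_inj (inv_inj (cflipK i0))); apply: eq_big => u; first by rewrite hP.
  by rewrite hpar; case: (par u).
rewrite mul2n -addnn {2}e -big_split big_distrl /=; apply: eq_bigr => u _.
by rewrite mul1n; case: (par u); rewrite // addnC.
Qed.

Lemma card_cube : \sum_(u : C d) 1 = 2 ^ d.
Proof. by rewrite sum1_card card_ffun card_ord card_ord. Qed.

Lemma count_half (k : 'I_d) : 2 * (\sum_(u : C d | ccv u k == 0) 1) = 2 ^ d.
Proof.
have h := @flip_sum k xpredT (fun u => ccv u k == 0) 1 0 (fun _ => erefl).
transitivity (2 * \sum_(u | xpredT u) (if ccv u k == 0 then 1 else 0)); first by rewrite big_mkcond.
rewrite h; first by rewrite card_cube muln1.
by move=> u; rewrite ccv_cflip eqxx; have := ccv_lt u k; case: (ccv u k) => [|[|]].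
Qed.

End Flip.

Lemma par_flip n m (b : grid n m) (hb : valid b) (u : C m) (i0 : 'I_m) L :
  L <= m -> i0 < L ->
  odd (\sum_(0 <= j < L) xc (gshift b (cflip u i0)) j) =
  ~~ odd (\sum_(0 <= j < L) xc (gshift b u) j).
Proof.
move=> hL hi; apply: (@odd_flip _ _ (ccv u i0)).
have hr : (nat_of_ord i0) \in index_iota 0 L by rewrite /index_iota mem_iota; lia.
rewrite !(bigD1_seq (nat_of_ord i0) hr (iota_uniq _ _)) /=.
rewrite !xcE !cv_gshift // ccv_cflip eqxx.
have -> : \sum_(i <- index_iota 0 L | i != i0) xc (gshift b (cflip u i0)) i =
          \sum_(i <- index_iota 0 L | i != i0) xc (gshift b u) i.
  rewrite big_seq_cond [RHS]big_seq_cond; apply: eq_bigr => j /andP [].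
  rewrite mem_iota /= => hj hji.
  have hjm : j < m by lia.
  rewrite !(xcN _ hjm) !cv_gshift // ccv_cflip.
  by case: eqP => // e; move: hji; rewrite -e eqxx.
have := ccv_lt u i0; lia.
Qed.

Lemma alt_aux p X Y : \sum_(0 <= k < p.*2) (if odd k.+1 then X else Y) = p * (X + Y).
Proof.
elim: p => [|p IH]; first by rewrite big_geq.
rewrite doubleS big_nat_recr // big_nat_recr //= IH.
rewrite odd_double /=; lia.
Qed.

Lemma alt_sum m X Y Z : 2 * Z = X + Y ->
  2 * \sum_(k < m) (if odd m.+1 || (k.+1 <= m.-1) then (if odd k.+1 then X else Y) else Z)
  = m * (X + Y).
Proof.
move=> hZ; rewrite -(big_mkord xpredT (fun k => if odd m.+1 || (k.+1 <= m.-1) then (if odd k.+1 then X else Y) else Z)).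
have hm := odd_double_half m; set p := m./2 in hm.
case: (odd m) hm => /= hm; rewrite -hm.
- rewrite add1n big_nat_recr //= !negbK odd_double ltnn /=.
  have -> : \sum_(0 <= i < p.*2) (if i < p.*2 then (if ~~ odd i then X else Y) else Z)
          = p * (X + Y).
    rewrite -alt_aux; apply: eq_big_nat => i /andP [_ hi]; by rewrite hi.
  lia.
- rewrite add0n /= odd_double /=.
  have -> : \sum_(0 <= i < p.*2) (if ~~ odd i then X else Y) = p * (X + Y).
    by rewrite -alt_aux.
  lia.
Qed.

Lemma div_uniq N a1 c1 a2 c2 : 1 <= a1 <= N -> 1 <= a2 <= N ->
  a1 + c1 * N = a2 + c2 * N -> a1 = a2 /\ c1 = c2.
Proof.
move=> h1 h2 e.
have [lt|gt|eq] := ltngtP c1 c2.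
- have : c1.+1 * N <= c2 * N by rewrite leq_mul2r lt orbT.
  rewrite mulSn; lia.
- have : c2.+1 * N <= c1 * N by rewrite leq_mul2r gt orbT.
  rewrite mulSn; lia.
- subst; lia.
Qed.

Lemma sum_last p c : \sum_(t < p) (if t + 1 < p then c else 0) = (p - 1) * c.
Proof.
case: p => [|p]; first by rewrite big_ord0.
rewrite big_ord_recr /= addn1 ltnn addn0 subSS subn0.
rewrite (eq_bigr (fun _ => c)) => [|i _]; last by rewrite /= addn1 ltnS ltn_ord.
by rewrite big_const_ord iter_addn_0 mulnC.
Qed.

Section Main.
Variables (m : nat) (n : nat -> nat).
Hypothesis hd : 3 <= m.+1.
Hypothesis hmono : forall i j, i <= j -> j < m.+1 -> n j <= n i.
Hypothesis hlast : 2 <= n m.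
Variables (ft : grid n m -> nat) (S : nat).
Hypothesis hft : vmagic (@cadj m) (@gadj n m) ft S.
Variables (gt : {set grid n m} -> nat) (S' : nat).
Hypothesis hgt : emagic (@cadj m) (@gadj n m) gt S'.
Variable g : {set grid n m.+1} -> nat.

Local Notation N := #|grid n m|.
Local Notation M := #|edges (@gadj n m)|.

Definition gform (x y : grid n m.+1) (k : 'I_m.+1) :=
       if val k == m then
         (if odd (\sum_(0 <= j < m) xc x j)
          then ft (restr x) + n m * M + (xc x m - 1) * N
          else ft (restr x) + n m * M + (n m - 1 - xc x m) * N)
       else if odd m.+1 || (k.+1 <= m.-1) then
         (if odd k.+1
          then gt [set restr x; restr y] + (xc x m - 1) * M
          else gt [set restr x; restr y] + (n m - xc x m) * M)
       else
         (if odd (\sum_(0 <= j < m.-1) xc x j)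
          then gt [set restr x; restr y] + (xc x m - 1) * M
          else gt [set restr x; restr y] + (n m - xc x m) * M).

Hypothesis hg : forall (x y : grid n m.+1) (k : 'I_m.+1),
     (forall j : 'I_m.+1, (y j : nat) = x j + (j == k)) -> g [set x; y] = gform x y k.

Lemma hg' x y k : stp x y k true -> g [set x; y] = gform x y k.
Proof. move=> h; apply: hg => j; move: (h j); rewrite andbF andbT addn0; exact. Qed.

Lemma npos (a : 'I_m.+1) : 1 < n a.
Proof. have := hmono (leq_ord a) (ltnSn m); lia. Qed.

Definition x0 : grid n m.+1 :=
  @finfun _ (fun a : 'I_m.+1 => 'I_(n a)) (fun a => Ordinal (ltnW (npos a))).

Lemma xc_max (x : grid n m.+1) : xc x m = (cv x ord_max).+1.
Proof. exact: (xcE x ord_max). Qed.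

Lemma sum_restr (x : grid n m.+1) L : L <= m ->
  \sum_(0 <= j < L) xc x j = \sum_(0 <= j < L) xc (restr x) j.
Proof.
move=> hL; apply: eq_big_nat => j /andP [_ hj]; rewrite xc_restr //; lia.
Qed.

Lemma stp_restr (x y : grid n m.+1) (k : 'I_m.+1) (hk : k < m) :
  stp x y k true -> stp (restr x) (restr y) (Ordinal hk) true.
Proof.
move=> h j; rewrite !cv_restr; move: (h (widen_ord (leqnSn m) j)).
by have -> : (widen_ord (leqnSn m) j == k) = (j == Ordinal hk).
Qed.

Lemma restr_edge (x y : grid n m.+1) (k : 'I_m.+1) : k < m -> stp x y k true ->
  [set restr x; restr y] \in edges (@gadj n m).
Proof. by move=> hk h; apply/edgesP; exists (restr x), (restr y), (Ordinal hk); split => //; apply: stp_restr. Qed.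


Lemma ft_range v : 1 <= ft v <= N.
Proof. by case: hft => [[_ h] _]. Qed.

Lemma ft_inj : injective ft.
Proof. by case: hft => [[h _] _]. Qed.

Lemma gt_range E : E \in edges (@gadj n m) -> 1 <= gt E <= M.
Proof. by case: hgt => [[_ h] _]; apply: h. Qed.

Lemma gt_inj : {in edges (@gadj n m) &, injective gt}.
Proof. by case: hgt => [[h _] _]. Qed.

Lemma xeq (x1 x2 : grid n m.+1) : restr x1 = restr x2 -> cv x1 ord_max = cv x2 ord_max -> x1 = x2.
Proof.
move=> e1 e2; apply: gridP => a.
case: (ltnP a m) => ha.
  have := congr1 (fun x => cv x (Ordinal ha)) e1; rewrite /= !cv_restr.
  by have -> : widen_ord (leqnSn m) (Ordinal ha) = a by apply: val_inj.
have -> : a = ord_max by apply: val_inj => /=; have := ltn_ord a; lia.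
exact: e2.
Qed.

Definition vc (x : grid n m.+1) :=
  if odd (\sum_(0 <= j < m) xc (restr x) j) then xc x m - 1 else n m - 1 - xc x m.

Lemma gv_vert (x y : grid n m.+1) : stp x y ord_max true -> g [set x; y] = ft (restr x) + n m * M + vc x * N.
Proof.
move=> h; rewrite (hg' h) /gform /= eqxx (@sum_restr x m) //.
by rewrite /vc; case: ifP.
Qed.

Lemma vc_bound (x y : grid n m.+1) : stp x y ord_max true -> vc x <= n m - 2.
Proof.
move=> h; have := stp_valid h; rewrite /vc xc_max /=.
by case: ifP => _; lia.
Qed.

Definition ho (x : grid n m.+1) (k : 'I_m.+1) :=
  if odd m.+1 || (k.+1 <= m.-1) then
    (if odd k.+1 then xc x m - 1 else n m - xc x m)
  else (if odd (\sum_(0 <= j < m.-1) xc (restr x) j) then xc x m - 1 else n m - xc x m).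

Lemma gv_hor (x y : grid n m.+1) (k : 'I_m.+1) : k < m -> stp x y k true ->
  g [set x; y] = gt [set restr x; restr y] + ho x k * M.
Proof.
move=> hk h; rewrite (hg' h) /gform /ho.
have -> : (val k == m) = false by apply/negbTE; rewrite neq_ltn hk.
rewrite (@sum_restr x m.-1); last by lia.
by case: ifP => _; case: ifP.
Qed.

Lemma ho_bound (x y : grid n m.+1) (k : 'I_m.+1) : stp x y k true -> ho x k <= n m - 1.
Proof.
move=> _; have := cv_lt x ord_max; rewrite /ho xc_max /=.
by case: ifP => _; case: ifP => _; lia.
Qed.

Lemma ho_inj (x1 x2 : grid n m.+1) (k : 'I_m.+1) : restr x1 = restr x2 -> ho x1 k = ho x2 k ->
  cv x1 ord_max = cv x2 ord_max.
Proof.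
move=> e; have := cv_lt x1 ord_max; have := cv_lt x2 ord_max.
rewrite /ho e !xc_max /=; by case: ifP => _; case: ifP => _; lia.
Qed.

Lemma vc_inj (x1 x2 : grid n m.+1) : restr x1 = restr x2 -> vc x1 = vc x2 ->
  cv x1 ord_max + 1 < n m -> cv x2 ord_max + 1 < n m -> cv x1 ord_max = cv x2 ord_max.
Proof.
move=> e; rewrite /vc e !xc_max /=; by case: ifP => _; lia.
Qed.

Lemma g_inj (x1 y1 : grid n m.+1) (k1 : 'I_m.+1) (x2 y2 : grid n m.+1) (k2 : 'I_m.+1) : stp x1 y1 k1 true -> stp x2 y2 k2 true ->
  g [set x1; y1] = g [set x2; y2] -> [set x1; y1] = [set x2; y2].
Proof.
move=> h1 h2 e.
suff [ex ek] : x1 = x2 /\ k1 = k2 by subst; rewrite (stp_det h1 h2).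
have hNpos : 0 < N by apply/card_gt0P; exists (restr x1).
case: (ltnP k1 m) => hk1; case: (ltnP k2 m) => hk2.
- rewrite (gv_hor hk1 h1) (gv_hor hk2 h2) in e.
  have r1 := gt_range (restr_edge hk1 h1); have r2 := gt_range (restr_edge hk2 h2).
  have [eg eo] := div_uniq r1 r2 e.
  have ee := gt_inj (restr_edge hk1 h1) (restr_edge hk2 h2) eg.
  have [er [_ ek]] := edge_uniq (stp_restr hk1 h1) (stp_restr hk2 h2) ee.
  have ek' : k1 = k2 by apply: val_inj; move: (congr1 val ek).
  subst k2; split => //; apply: xeq => //; exact: (ho_inj er eo).
- have ek2 : k2 = ord_max by apply: val_inj => /=; have := ltn_ord k2; lia.
  subst k2; rewrite (gv_hor hk1 h1) (gv_vert h2) in e; exfalso.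
  have r1 := gt_range (restr_edge hk1 h1); have b1 := ho_bound h1.
  have := ft_range (restr x2).
  have : ho x1 k1 * M <= (n m - 1) * M by rewrite leq_mul2r b1 orbT.
  have : (n m - 1) * M + M = n m * M by nia.
  lia.
- have ek1 : k1 = ord_max by apply: val_inj => /=; have := ltn_ord k1; lia.
  subst k1; rewrite (gv_hor hk2 h2) (gv_vert h1) in e; exfalso.
  have r2 := gt_range (restr_edge hk2 h2); have b2 := ho_bound h2.
  have := ft_range (restr x1).
  have : ho x2 k2 * M <= (n m - 1) * M by rewrite leq_mul2r b2 orbT.
  have : (n m - 1) * M + M = n m * M by nia.
  lia.
- have ek1 : k1 = ord_max by apply: val_inj => /=; have := ltn_ord k1; lia.
  have ek2 : k2 = ord_max by apply: val_inj => /=; have := ltn_ord k2; lia.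
  subst k1 k2; rewrite (gv_vert h1) (gv_vert h2) in e.
  have r1 := ft_range (restr x1); have r2 := ft_range (restr x2).
  have e' : ft (restr x1) + vc x1 * N = ft (restr x2) + vc x2 * N by lia.
  have [ef ev] := div_uniq r1 r2 e'.
  have er := ft_inj ef.
  split => //; apply: xeq => //; apply: vc_inj => //.
    exact: (stp_valid h1).
  exact: (stp_valid h2).
Qed.


Lemma card_edges_big : #|edges (@gadj n m.+1)| = n m * M + (n m - 1) * N.
Proof.
have hM : M = \sum_(k < m) \sum_(x : grid n m | cv x k + 1 < n k) 1.
  by rewrite -sum1_card edge_sum.
have hN : N = \sum_(x : grid n m) 1 by rewrite sum1_card.
rewrite -sum1_card edge_sum big_ord_recr /=.
congr (_ + _).
  rewrite hM big_distrr /=; apply: eq_bigr => k _.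
  rewrite big_mkcond (sum_ext x0) /=.
  rewrite (eq_bigr (fun _ => \sum_(x : grid n m | cv x k + 1 < n k) 1)); last first.
    move=> t _; rewrite [RHS]big_mkcond; apply: eq_bigr => x _.
    by rewrite cv_gext /= ltn_ord cvnE.
  by rewrite big_const_ord iter_addn_0 mulnC.
rewrite big_mkcond (sum_ext x0) /=.
transitivity (\sum_(t < n m) (if t + 1 < n m then N else 0)); last exact: sum_last.
apply: eq_bigr => t _.
rewrite (eq_bigr (fun _ => if t + 1 < n m then 1 else 0)); last first.
  by move=> x _; rewrite cv_gext /= ltnn.
case: ifP => _; last by rewrite big1.
by rewrite sum1_card.
Qed.


Lemma g_range (x y : grid n m.+1) (k : 'I_m.+1) : stp x y k true ->
  1 <= g [set x; y] <= n m * M + (n m - 1) * N.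
Proof.
move=> h; case: (ltnP k m) => hk.
  rewrite (gv_hor hk h).
  have r := gt_range (restr_edge hk h); have b := ho_bound h.
  have : ho x k * M <= (n m - 1) * M by rewrite leq_mul2r b orbT.
  have : (n m - 1) * M + M = n m * M by nia.
  lia.
have ek : k = ord_max by apply: val_inj => /=; have := ltn_ord k; lia.
subst k; rewrite (gv_vert h).
have r := ft_range (restr x); have b := vc_bound h.
have : vc x * N <= (n m - 2) * N by rewrite leq_mul2r b orbT.
have : (n m - 2) * N + N = (n m - 1) * N by nia.
lia.
Qed.

Lemma g_elab : elabeling (@gadj n m.+1) g.
Proof.
split.
  move=> E1 E2 /edgesP [x1 [y1 [k1 [h1 ->]]]] /edgesP [x2 [y2 [k2 [h2 ->]]]].
  exact: g_inj h1 h2.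
move=> E /edgesP [x [y [k [h ->]]]]; rewrite card_edges_big; exact: g_range h.
Qed.


Definition cext (u : C m) (t : 'I_2) : C m.+1 := @gext (fun _ => 2) m (cz m.+1) u t.

Lemma restr_cext u t : restr (cext u t) = u.
Proof. exact: restr_gext. Qed.

Lemma ccv_cext_max u t : ccv (cext u t) ord_max = t.
Proof. exact: cv_gext_max. Qed.

Lemma ccv_cext_w u t (k : 'I_m) : ccv (cext u t) (widen_ord (leqnSn m) k) = ccv u k.
Proof. by rewrite /ccv /cext cv_gext /= ltn_ord cvnE. Qed.

Lemma cube_split (F : C m.+1 -> nat) :
  \sum_(u : C m.+1) F u = \sum_(u : C m) (F (cext u ord0) + F (cext u ord_max)).
Proof.
rewrite (@sum_ext (fun _ => 2) m (cz m.+1)) /= big_ord_recr big_ord_recr big_ord0 /= add0n.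
by rewrite -big_split.
Qed.

Lemma ccv_restr (u : C m.+1) (j : 'I_m) : ccv (restr u) j = ccv u (widen_ord (leqnSn m) j).
Proof. exact: cv_restr. Qed.

Lemma restr_csucc_w (u : C m.+1) (k : 'I_m) : ccv u (widen_ord (leqnSn m) k) = 0 ->
  restr (csucc u (widen_ord (leqnSn m) k)) = csucc (restr u) k.
Proof.
move=> h; apply: (@gridP (fun _ => 2)) => j; rewrite -!/(ccv _ j) ccv_restr !ccv_csucc //; last by rewrite ccv_restr.
by rewrite ccv_restr.
Qed.

Section Shifted.
Variable b : grid n m.+1.
Hypothesis hb : valid b.

Lemma hb' : valid (restr b).
Proof. by move=> j; rewrite cv_restr; apply: hb. Qed.

Lemma restr_gshift u : restr (gshift b u) = gshift (restr b) (restr u).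
Proof.
apply: gridP => j; rewrite cv_restr !cv_gshift //; last exact: hb'.
by rewrite cv_restr ccv_restr.
Qed.

Lemma xc_gshift_max u : xc (gshift b u) m = cv b ord_max + ccv u ord_max + 1.
Proof. by rewrite xc_max cv_gshift // addn1. Qed.

Lemma stp_gs u k : ccv u k = 0 -> stp (gshift b u) (gshift b (csucc u k)) k true.
Proof. by move=> h; apply/(stp_gshift _ _ _ _ hb); apply: cstp. Qed.


Lemma vert_sum :
  \sum_(u : C m.+1 | ccv u ord_max == 0) g [set gshift b u; gshift b (csucc u ord_max)]
  = S + 2 ^ m * (n m * M) + 2 ^ m.-1 * (n m - 2) * N.
Proof.
set b' := restr b; set beta := cv b ord_max.
have hbeta : beta + 1 < n m := hb ord_max.
have hm0 : 0 < m by lia.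
rewrite big_mkcond cube_split /=.
rewrite (eq_bigr (fun u => ft (gshift b' u) + n m * M +
   (if odd (\sum_(0 <= j < m) xc (gshift b' u) j) then beta else n m - 2 - beta) * N)); last first.
  move=> u _; rewrite !ccv_cext_max /= addn0.
  rewrite (gv_vert (@stp_gs (cext u ord0) ord_max (ccv_cext_max u ord0))) restr_gshift // restr_cext.
  rewrite /vc restr_gshift // restr_cext xc_gshift_max // ccv_cext_max /=.
  by case: ifP => _; congr (_ + _ * _); lia.
rewrite !big_split /= -big_distrl /=.
have hS : \sum_(u : C m) ft (gshift b' u) = S.
  by case: hft => _ h; apply: h; apply: gshift_emb; apply: hb'.
have hc : \sum_(u : C m) n m = 2 ^ m * n m.
  by rewrite -card_cube big_distrl /=; apply: eq_bigr => u _; rewrite mul1n.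
have hp : 2 * \sum_(u : C m) (if odd (\sum_(0 <= j < m) xc (gshift b' u) j) then beta else n m - 2 - beta)
          = 2 ^ m * (n m - 2).
  have := @flip_sum m (Ordinal hm0) xpredT (fun u => odd (\sum_(0 <= j < m) xc (gshift b' u) j))
     beta (n m - 2 - beta) (fun _ => erefl) _.
  rewrite card_cube => ->; first by congr (_ * _); lia.
  by move=> u; apply: par_flip => //; apply: hb'.
have e2 : 2 ^ m = 2 * 2 ^ m.-1 by rewrite -expnS prednK.
have hB : \sum_(u : C m) (if odd (\sum_(0 <= j < m) xc (gshift b' u) j) then beta else n m - 2 - beta)
   = 2 ^ m.-1 * (n m - 2).
  by apply/eqP; rewrite -(eqn_pmul2l (isT : 0 < 2)) mulnA -e2 hp.
rewrite hS hc -hB big_distrl /= -!mulnA; reflexivity.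
Qed.


Definition hoff (k : 'I_m) (u : C m) (t : nat) :=
  if (if odd m.+1 || (k.+1 <= m.-1) then odd k.+1
      else odd (\sum_(0 <= j < m.-1) xc (gshift (restr b) u) j))
  then cv b ord_max + t else n m - (cv b ord_max + t + 1).

Lemma hor_k (k : 'I_m) :
  \sum_(u : C m.+1 | ccv u (widen_ord (leqnSn m) k) == 0)
     g [set gshift b u; gshift b (csucc u (widen_ord (leqnSn m) k))] =
  \sum_(u : C m | ccv u k == 0)
     (2 * gt [set gshift (restr b) u; gshift (restr b) (csucc u k)] +
      (hoff k u 0 + hoff k u 1) * M).
Proof.
rewrite big_mkcond cube_split [RHS]big_mkcond; apply: eq_bigr => u _.
rewrite !ccv_cext_w; case: ifP => // /eqP hu.
have hk : widen_ord (leqnSn m) k < m by rewrite /= ltn_ord.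
have e : forall t : 'I_2, g [set gshift b (cext u t); gshift b (csucc (cext u t) (widen_ord (leqnSn m) k))]
   = gt [set gshift (restr b) u; gshift (restr b) (csucc u k)] + hoff k u t * M.
  move=> t; have hut : ccv (cext u t) (widen_ord (leqnSn m) k) = 0 by rewrite ccv_cext_w.
  rewrite (gv_hor hk (stp_gs hut)) !restr_gshift // restr_cext restr_csucc_w // restr_cext.
  congr (_ + _ * _); rewrite /ho /hoff restr_gshift // restr_cext xc_gshift_max // ccv_cext_max /=.
  by repeat (case: ifP => _); lia.
rewrite !e /=; lia.
Qed.


Definition Cd (k : 'I_m) :=
  if odd m.+1 || (k.+1 <= m.-1)
  then (if odd k.+1 then 2 * cv b ord_max + 1 else 2 * n m - 2 * cv b ord_max - 3)
  else n m - 1.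

Lemma cnt_half (k : 'I_m) : \sum_(u : C m | ccv u k == 0) 1 = 2 ^ m.-1.
Proof.
apply/eqP; rewrite -(eqn_pmul2l (isT : 0 < 2)) count_half -expnS prednK //; lia.
Qed.

Lemma hk_val (k : 'I_m) :
  \sum_(u : C m | ccv u k == 0) (hoff k u 0 + hoff k u 1) = 2 ^ m.-1 * Cd k.
Proof.
have hbeta : cv b ord_max + 1 < n m := hb ord_max.
rewrite /Cd /hoff; case hc: (odd m.+1 || (k.+1 <= m.-1)).
  rewrite (eq_bigr (fun _ => if odd k.+1 then 2 * cv b ord_max + 1 else 2 * n m - 2 * cv b ord_max - 3)); last first.
    by move=> u _; case: ifP => _; lia.
  by rewrite -(cnt_half k) big_distrl /=; apply: eq_bigr => u _; rewrite mul1n.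
have hm : 1 < m by lia.
have hm0 : 0 < m by lia.
set i0 := Ordinal hm0.
have hk0 : k != i0 by apply/eqP => e; move: hc; rewrite e /=; case: (odd m) => /=; lia.
rewrite (eq_bigr (fun u => if odd (\sum_(0 <= j < m.-1) xc (gshift (restr b) u) j)
    then 2 * cv b ord_max + 1 else 2 * n m - 2 * cv b ord_max - 3)); last first.
  by move=> u _; case: ifP => _; lia.
apply/eqP; rewrite -(eqn_pmul2l (isT : 0 < 2)); apply/eqP.
rewrite (@flip_sum m i0 (fun u => ccv u k == 0)).
- rewrite cnt_half; have -> : 2 * cv b ord_max + 1 + (2 * n m - 2 * cv b ord_max - 3) = 2 * (n m - 1) by lia.
  by rewrite mulnCA.
- by move=> u; rewrite ccv_cflip (negbTE hk0).
- by move=> u; apply: par_flip => //; [apply: hb' | lia | rewrite /=; lia].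
Qed.


Lemma hor_sum :
  \sum_(k < m) \sum_(u : C m.+1 | ccv u (widen_ord (leqnSn m) k) == 0)
     g [set gshift b u; gshift b (csucc u (widen_ord (leqnSn m) k))] =
  2 * S' + 2 ^ m.-1 * (m * (n m - 1)) * M.
Proof.
have hbeta : cv b ord_max + 1 < n m := hb ord_max.
transitivity (\sum_(k < m) (2 * \sum_(u : C m | ccv u k == 0) gt [set gshift (restr b) u; gshift (restr b) (csucc u k)]
   + (2 ^ m.-1 * Cd k) * M)).
  apply: eq_bigr => k _; rewrite hor_k big_split /= -big_distrr -big_distrl /= hk_val //.
rewrite big_split /= -big_distrr -big_distrl /= -big_distrr /=.
have hS' : \sum_(k < m) \sum_(u : C m | ccv u k == 0) gt [set gshift (restr b) u; gshift (restr b) (csucc u k)] = S'.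
  case: hgt => _ h; rewrite -(h _ (gshift_emb (hb' ))) cube_sum //; exact: hb'.
have hC : \sum_(k < m) Cd k = m * (n m - 1).
  apply/eqP; rewrite -(eqn_pmul2l (isT : 0 < 2)); apply/eqP.
  rewrite /Cd (@alt_sum m _ _ (n m - 1)); lia.
by rewrite hS' hC mulnA.
Qed.

End Shifted.


Lemma g_magic (phi : C m.+1 -> grid n m.+1) : embedding (@cadj m.+1) (@gadj n m.+1) phi ->
  \sum_(E in edges (@cadj m.+1)) g (phi @: E) =
    S + 2 * S' + 2 ^ (m.+1 - 2) * (n m - 2) * N
       + 2 ^ (m.+1 - 2) * (2 * n m + m * (n m - 1)) * M.
Proof.
move=> emb; have [b [hb ->]] := magic_reduce g emb.
rewrite cube_sum // big_ord_recr /=.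
have := hor_sum hb; have := vert_sum hb; rewrite /csucc => -> ->.
have -> : m.+1 - 2 = m.-1 by lia.
have -> : 2 ^ m = 2 * 2 ^ m.-1 by rewrite -expnS prednK //; lia.
set P := 2 ^ m.-1.
set NN := #|grid n m|. set MM := #|edges _|. set a := n m - 1. set c := n m - 2. nia.
Qed.

Lemma main_emagic : emagic (@cadj m.+1) (@gadj n m.+1) g
    (S + 2 * S' + 2 ^ (m.+1 - 2) * (n m - 2) * N
       + 2 ^ (m.+1 - 2) * (2 * n m + m * (n m - 1)) * M).
Proof. split; [exact: g_elab | exact: g_magic]. Qed.

End Main.

(* d = m.+1; n j = n_{j+1}; coordinates x_{j+1} = xc x j (1-based). *)
Theorem lemma6 (m : nat) (n : nat -> nat)
  (hd : 3 <= m.+1)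
  (hmono : forall i j, i <= j -> j < m.+1 -> n j <= n i)
  (hlast : 2 <= n m)
  (ft : grid n m -> nat) (S : nat)
  (hft : vmagic (@cadj m) (@gadj n m) ft S)
  (gt : {set grid n m} -> nat) (S' : nat)
  (hgt : emagic (@cadj m) (@gadj n m) gt S')
  (g : {set grid n m.+1} -> nat) :
  let N := #|grid n m| in
  let M := #|edges (@gadj n m)| in
  (forall (x y : grid n m.+1) (k : 'I_m.+1),
     (forall j : 'I_m.+1, (y j : nat) = x j + (j == k)) ->
     g [set x; y] =
       if val k == m then
         (if odd (\sum_(0 <= j < m) xc x j)
          then ft (restr x) + n m * M + (xc x m - 1) * N
          else ft (restr x) + n m * M + (n m - 1 - xc x m) * N)
       else if odd m.+1 || (k.+1 <= m.-1) then
         (if odd k.+1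
          then gt [set restr x; restr y] + (xc x m - 1) * M
          else gt [set restr x; restr y] + (n m - xc x m) * M)
       else
         (if odd (\sum_(0 <= j < m.-1) xc x j)
          then gt [set restr x; restr y] + (xc x m - 1) * M
          else gt [set restr x; restr y] + (n m - xc x m) * M)) ->
  emagic (@cadj m.+1) (@gadj n m.+1) g
    (S + 2 * S' + 2 ^ (m.+1 - 2) * (n m - 2) * N
       + 2 ^ (m.+1 - 2) * (2 * n m + m * (n m - 1)) * M).
Proof.
move=> N M hg.
exact: (@main_emagic m n hd hmono hlast ft S hft gt S' hgt g hg).
Qed.
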